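(* Let $A$ be an $n\times m$ complex matrix of rank $n$ with $n\le m$, let $b\in\mathbb C^n$, and let $X=\{x\in\mathbb C^m:Ax=b\}$. Then $\Sigma_X=\Sigma_X^\infty$. These sets are nonempty if and only if $\det(AA^\top)=0$, and in that case they equal the affine linear space $\{u\in\mathbb C^m:Au-b\in\mathrm{Im}(AA^\top)\}$, which has dimension $m-n+\mathrm{rank}(AA^\top)$.
   Context: For $x,y\in\mathbb C^m$, $x\cdot y=\sum x_iy_i$ (complex bilinear). For an irreducible variety $X\subseteq\mathbb C^m$ and $x\in X_{\mathrm{reg}}$, $N_xX$ is the span of gradients at $x$ of generators of the ideal of $X$ (for $X=\{Ax=b\}$ this is the row space of $A$, i.e. $\mathrm{Im}A^\top$). The ED correspondence $\mathcal E_X$ is the Zariski closure of $\{(x,u):x\in X_{\mathrm{reg}},\ u-x\in N_xX\}$ and $\mathcal E_X(u)=\{x:(x,u)\in\mathcal E_X\}$. The infinite ED discriminant is $\Sigma_X^\infty=\{u:\dim\mathcal E_X(u)\ge1\}$. The (affine) ED discriminant $\Sigma_X$ is the set of $u$ such that either $\mathcal E_X(u)$ has an isolated point $x$ of multiplicity at least $2$ (as a solution in $x$ of the equations of $\mathcal E_X$ with $u$ fixed), or $\mathcal E_X(u)$ is infinite. *)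

(* Defs.v *)
From mathcomp Require Import all_boot all_algebra.
From mathcomp Require Import complex Rstruct.

Set Implicit Arguments.
Unset Strict Implicit.
Unset Printing Implicit Defensive.

Import GRing.Theory.
Local Open Scope ring_scope.

Notation CC := (Rdefinitions.R)[i].

(* Polynomials in variables indexed by V with coefficients in C, as formal    *)
(* expressions (every polynomial is represented), with evaluation and formal  *)
(* partial derivatives.                                                       *)
Inductive pexpr (C : Type) (V : Type) : Type :=
  | PC of C
  | PV of V
  | PAdd of pexpr C V & pexpr C V
  | PMul of pexpr C V & pexpr C V.

Arguments PC {C V}.
Arguments PV {C V}.

Fixpoint peval (C : pzRingType) (V : Type) (z : V -> C) (p : pexpr C V) : C :=
  match p with
  | PC c => c
  | PV v => z v
  | PAdd p q => peval z p + peval z q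
  | PMul p q => peval z p * peval z q
  end.

Fixpoint pderiv (C : pzRingType) (V : eqType) (i : V) (p : pexpr C V) : pexpr C V :=
  match p with
  | PC _ => PC 0
  | PV v => PC (if v == i then 1 else 0)
  | PAdd p q => PAdd (pderiv i p) (pderiv i q)
  | PMul p q => PAdd (PMul (pderiv i p) q) (PMul p (pderiv i q))
  end.

Section ED.
Variable C : fieldType.
Variable m : nat.

Definition cvval (x : 'cV[C]_m) : 'I_m -> C := fun i => x i 0.

Definition pairval (x u : 'cV[C]_m) : 'I_m + 'I_m -> C :=
  fun s => match s with inl i => x i 0 | inr i => u i 0 end.

Definition pgrad (p : pexpr C 'I_m) (x : 'cV[C]_m) : 'cV[C]_m :=
  \col_i peval (cvval x) (pderiv i p).

Definition in_ideal (X : 'cV[C]_m -> Prop) (p : pexpr C 'I_m) : Prop :=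
  forall x, X x -> peval (cvval x) p = 0.

(* N_x X : the span of the gradients at x of elements of the ideal of X
   (equivalently, of a generating set of that ideal). *)
Definition normal_space (X : 'cV[C]_m -> Prop) (x v : 'cV[C]_m) : Prop :=
  exists k (ps : 'I_k -> pexpr C 'I_m) (c : 'I_k -> C),
    (forall j, in_ideal X (ps j)) /\ v = \sum_(j < k) c j *: pgrad (ps j) x.

Definition normal_dim_ge (X : 'cV[C]_m -> Prop) (x : 'cV[C]_m) (k : nat) : Prop :=
  exists M : 'M[C]_(m, k), \rank M = k /\ forall j, normal_space X x (col j M).

(* Regular points of an irreducible variety X: the points where the Jacobian
   rank of the ideal (= dim N_x X) attains its maximal (= generic) value,
   namely the codimension of X. *)
Definition regular_point (X : 'cV[C]_m -> Prop) (x : 'cV[C]_m) : Prop :=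
  X x /\ forall y k, X y -> normal_dim_ge X y k -> normal_dim_ge X x k.

(* The set whose Zariski closure is the ED correspondence *)
Definition ED_pre (X : 'cV[C]_m -> Prop) (x u : 'cV[C]_m) : Prop :=
  regular_point X x /\ normal_space X x (u - x).

Definition ED_ideal (X : 'cV[C]_m -> Prop) (p : pexpr C ('I_m + 'I_m)) : Prop :=
  forall x u, ED_pre X x u -> peval (pairval x u) p = 0.

(* The ED correspondence E_X: Zariski closure of ED_pre in C^m x C^m. *)
Definition ED_corr (X : 'cV[C]_m -> Prop) (x u : 'cV[C]_m) : Prop :=
  forall p, ED_ideal X p -> peval (pairval x u) p = 0.

Definition ED_fiber (X : 'cV[C]_m -> Prop) (u : 'cV[C]_m) : 'cV[C]_m -> Prop :=
  fun x => ED_corr X x u.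

Definition infinite_set (S : 'cV[C]_m -> Prop) : Prop :=
  forall s : seq 'cV[C]_m, exists x, S x /\ x \notin s.

(* Infinite ED discriminant: dim E_X(u) >= 1, i.e. the algebraic set E_X(u)
   is infinite (an algebraic set has dimension >= 1 iff it is infinite). *)
Definition ED_disc_inf (X : 'cV[C]_m -> Prop) (u : 'cV[C]_m) : Prop :=
  infinite_set (ED_fiber X u).

(* x is an isolated point (in the Zariski topology) of E_X(u) *)
Definition isolated_in (S : 'cV[C]_m -> Prop) (x : 'cV[C]_m) : Prop :=
  S x /\ exists g : pexpr C 'I_m,
    peval (cvval x) g != 0 /\ forall y, S y -> y != x -> peval (cvval y) g = 0.

(* The isolated solution x of the equations of E_X with u fixed has
   multiplicity >= 2: the local ring of the solution scheme at x is not C,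
   i.e. its Zariski tangent space at x is nonzero: some v <> 0 is killed by
   the x-differentials at (x,u) of all equations of E_X. *)
Definition mult_ge2 (X : 'cV[C]_m -> Prop) (u x : 'cV[C]_m) : Prop :=
  exists v : 'cV[C]_m, v != 0 /\
    forall p, ED_ideal X p ->
      \sum_(i < m) peval (pairval x u) (pderiv (inl i) p) * v i 0 = 0.

Definition ED_disc (X : 'cV[C]_m -> Prop) (u : 'cV[C]_m) : Prop :=
  (exists x, isolated_in (ED_fiber X u) x /\ mult_ge2 X u x)
  \/ infinite_set (ED_fiber X u).

End ED.

(* Main.v *)
Require Import Defs.
From mathcomp Require Import all_boot all_algebra.
From mathcomp Require Import complex Rstruct ring zify.
Import GRing.Theory Num.Theory.
Local Open Scope ring_scope.

Section Poly.
Variables (m : nat) (x v : 'cV[CC]_m).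

Fixpoint upol (p : pexpr CC 'I_m) : {poly CC} :=
  match p with
  | PC c => c%:P
  | PV j => (x j 0)%:P + (v j 0)%:P * 'X
  | PAdd p q => upol p + upol q
  | PMul p q => upol p * upol q
  end.

Definition dd (p : pexpr CC 'I_m) := \sum_i peval (cvval x) (pderiv i p) * v i 0.

Lemma upol_eval p t : (upol p).[t] = peval (cvval (x + t *: v)) p.
Proof.
elim: p => [c|j|p IHp q IHq|p IHp q IHq] /=.
- by rewrite hornerC.
- by rewrite hornerD hornerC hornerCM hornerX /cvval !mxE mulrC.
- by rewrite hornerD IHp IHq.
- by rewrite hornerM IHp IHq.
Qed.

Lemma upol_c0 p : (upol p)`_0 = peval (cvval x) p.
Proof. by rewrite -horner_coef0 upol_eval scale0r addr0. Qed.

Lemma upol_c1 p : (upol p)`_1 = dd p.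
Proof.
rewrite /dd; elim: p => [c|j|p IHp q IHq|p IHp q IHq] /=.
- by rewrite coefC big1 // => i _; rewrite mul0r.
- rewrite coefD coefC coefCM coefX /= add0r mulr1.
  rewrite (bigD1 j) //= eqxx mul1r big1 ?addr0 // => i /negbTE.
  by rewrite eq_sym => ->; rewrite mul0r.
- by rewrite coefD IHp IHq -big_split /=; apply: eq_bigr => i _; rewrite mulrDl.
- rewrite coefM !big_ord_recl big_ord0 /= addr0 !upol_c0.
  have -> : (1 - 0)%N = 1%N by []. have -> : bump 0 0 = 1%N by [].
  rewrite IHp IHq mulr_suml mulr_sumr -big_split /=.
  by apply: eq_bigr => i _; ring.
Qed.

Lemma dd_zero p : (forall t, peval (cvval (x + t *: v)) p = 0) -> dd p = 0.
Proof.
move=> H; rewrite -upol_c1.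
have -> : upol p = 0; last by rewrite coef0.
apply/eqP; apply: contraT => nz.
have := @max_poly_roots _ (upol p) [seq k%:R | k <- iota 0 (size (upol p))] nz.
rewrite size_map size_iota ltnn; apply.
- by apply/allP => t _; rewrite /root upol_eval H.
- by rewrite map_inj_uniq ?iota_uniq // => a c /eqP; rewrite eqr_nat => /eqP.
Qed.
End Poly.

Definition psum (V T : Type) (s : seq T) (F : T -> pexpr CC V) : pexpr CC V :=
  foldr (fun j acc => PAdd (F j) acc) (PC 0) s.
Arguments psum {V T}.

Lemma peval_psum (V T : Type) z (s : seq T) (F : T -> pexpr CC V) :
  peval z (psum s F) = \sum_(j <- s) peval z (F j).
Proof. by elim: s => [|a s IH] /=; rewrite ?big_nil ?big_cons ?IH. Qed.

Lemma pderiv_psum (V : eqType) (T : Type) i z (s : seq T) (F : T -> pexpr CC V) :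
  peval z (pderiv i (psum s F)) = \sum_(j <- s) peval z (pderiv i (F j)).
Proof. by elim: s => [|a s IH] /=; rewrite ?big_nil ?big_cons ?IH. Qed.

Section Lin.
Variable m : nat.
Definition dot (k v : 'cV[CC]_m) := \sum_i k i 0 * v i 0.

Lemma dotE k v : dot k v = (k^T *m v) 0 0.
Proof. by rewrite mxE; apply: eq_bigr => i _; rewrite mxE. Qed.

Definition lx (a : 'cV[CC]_m) (c : CC) : pexpr CC 'I_m :=
  PAdd (psum (index_enum 'I_m) (fun j => PMul (PC (a j 0)) (PV j))) (PC c).

Lemma peval_lx a c y : peval (cvval y) (lx a c) = dot a y + c.
Proof. by rewrite /= peval_psum. Qed.

Lemma pderiv_lx a c i z : peval z (pderiv i (lx a c)) = a i 0.
Proof.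
rewrite /= pderiv_psum /= addr0.
rewrite (bigD1 i) //= eqxx mulr1 mul0r add0r big1 ?addr0 // => j /negbTE ->.
by rewrite mulr0 mul0r addr0.
Qed.

Definition lpair (a a' : 'cV[CC]_m) (c : CC) : pexpr CC ('I_m + 'I_m) :=
  PAdd (psum (index_enum 'I_m) (fun j => PAdd (PMul (PC (a j 0)) (PV (inl j)))
                                              (PMul (PC (a' j 0)) (PV (inr j))))) (PC c).

Lemma peval_lpair a a' c x u : peval (pairval x u) (lpair a a' c) = dot a x + dot a' u + c.
Proof. by rewrite /= peval_psum big_split. Qed.

Lemma pderiv_lpair a a' c i z : peval z (pderiv (inl i) (lpair a a' c)) = a i 0.
Proof.
rewrite /= pderiv_psum /= addr0.
rewrite (bigD1 i) //= eqxx mulr1 !mul0r !add0r mulr0 addr0 big1 ?addr0 // => j /negbTE ji.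
have -> : (inl j == inl i :> 'I_m + 'I_m) = false by rewrite /eq_op /= ji.
by rewrite !mulr0 !mul0r !addr0.
Qed.
End Lin.
Arguments dot {m}. Arguments lx {m}. Arguments lpair {m}.

Section Alg.
Variables (n m : nat) (A : 'M[CC]_(n, m)).

Lemma imT (v : 'cV[CC]_m) :
  (exists z, v = A^T *m z) <-> (forall k, A *m k = 0 -> dot k v = 0).
Proof.
split.
- move=> [z ->] k Ak; rewrite dotE mulmxA -trmx_mul Ak trmx0 mul0mx mxE.
  by [].
- move=> H.
  have : (v^T <= A)%MS.
    rewrite submxE; apply/eqP/matrixP => i j; rewrite ord1 !mxE.
    have Ak : A *m col j (cokermx A) = 0 by rewrite colE mulmxA mulmx_coker mul0mx.
    apply: etrans (H _ Ak); rewrite /dot.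
    by apply: eq_bigr => l _; rewrite !mxE mulrC.
  move/submxP => [D HD]; exists D^T.
  by rewrite -(trmxK v) HD trmx_mul.
Qed.
End Alg.

Lemma dot_row (n m : nat) (A : 'M[CC]_(n, m)) i y : dot (row i A)^T y = (A *m y) i 0.
Proof. by rewrite mxE; apply: eq_bigr => j _; rewrite !mxE. Qed.

Lemma dot0 m (y : 'cV[CC]_m) : dot 0 y = 0.
Proof. by rewrite /dot big1 // => i _; rewrite mxE mul0r. Qed.

Lemma dot_sub m (k x u : 'cV[CC]_m) : dot (-k) x + dot k u = dot k (u - x).
Proof. rewrite /dot -big_split; apply: eq_bigr => i _; rewrite !mxE /=; ring. Qed.

Lemma dotN m (k x : 'cV[CC]_m) : dot (-k) x = - dot k x.
Proof. by rewrite /dot -sumrN; apply: eq_bigr => i _; rewrite !mxE mulNr. Qed.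

Section ED.
Variables (n m : nat) (A : 'M[CC]_(n, m)) (b : 'cV[CC]_n).
Let X := fun x : 'cV[CC]_m => A *m x = b.

Lemma normalE x w : X x -> normal_space X x w <-> exists z, w = A^T *m z.
Proof.
move=> Xx; split.
- case=> k [ps [c [Hid ->]]]; apply/imT => kk Akk.
  have Hg : forall j, dot kk (pgrad (ps j) x) = 0.
    move=> j; rewrite -(@dd_zero _ x kk (ps j)).
      by rewrite /dot /dd; apply: eq_bigr => i _; rewrite mxE mulrC.
    move=> t; apply: Hid.
    by rewrite /X mulmxDr Xx -scalemxAr Akk scaler0 addr0.
  rewrite /dot (eq_bigr (fun i => \sum_j c j * (kk i 0 * pgrad (ps j) x i 0))).
    rewrite exchange_big big1 // => j _.
    by rewrite -mulr_sumr -/(dot kk (pgrad (ps j) x)) Hg mulr0.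
  move=> i _; rewrite summxE mulr_sumr; apply: eq_bigr => j _; rewrite mxE; ring.
- case=> z ->; exists n, (fun j => lx (row j A)^T (- b j 0)), (fun j => z j 0); split.
  + move=> j y Xy; rewrite peval_lx dot_row Xy; exact: subrr.
  + apply/matrixP => i l; rewrite ord1 !mxE summxE; apply: eq_bigr => j _.
    by rewrite !mxE pderiv_lx !mxE mulrC.
Qed.

Lemma regularE x : X x -> regular_point X x.
Proof.
move=> Xx; split=> // y k Xy [M [rk HM]]; exists M; split=> // j.
by apply/(normalE _ _ Xx); apply/(normalE _ _ Xy).
Qed.

Lemma EDpreE x u : ED_pre X x u <-> X x /\ exists z, u - x = A^T *m z.
Proof.
split.
- by case=> [[Xx _]] /(normalE _ _ Xx) H.
- by case=> Xx H; split; [exact: regularE | apply/(normalE _ _ Xx)].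
Qed.

Lemma ideal_row i : ED_ideal X (lpair (row i A)^T 0 (- b i 0)).
Proof. by move=> x u /EDpreE [Xx _]; rewrite peval_lpair dot_row dot0 addr0 Xx subrr. Qed.

Lemma ideal_ker k : A *m k = 0 -> ED_ideal X (lpair (-k) k 0).
Proof.
move=> Ak x u /EDpreE [_ H]; rewrite peval_lpair addr0 dot_sub.
by move/imT: H; apply.
Qed.

Lemma EDcorrE x u : ED_corr X x u <-> X x /\ exists z, u - x = A^T *m z.
Proof.
split.
- move=> H; split.
    apply/matrixP => i j; rewrite ord1; have := H _ (ideal_row i).
    by rewrite peval_lpair dot_row dot0 addr0 => /eqP; rewrite subr_eq0 => /eqP.
  apply/imT => k Ak; have := H _ (ideal_ker _ Ak).
  by rewrite peval_lpair addr0 dot_sub.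
- by move=> H p Hp; apply: Hp; apply/EDpreE.
Qed.


Lemma fiber_inf x u : row_free A -> \det (A *m A^T) = 0 -> ED_corr X x u ->
  infinite_set (ED_fiber X u).
Proof.
move=> rfA /eqP /det0P [r rn Hr] /EDcorrE [Xx [z Hz]].
set d := A^T *m r^T.
have AAr : A *m d = 0.
  by have := congr1 trmx Hr; rewrite trmx0 !trmx_mul trmxK -mulmxA.
have dn : d != 0.
  apply: contra rn => /eqP d0; rewrite -(mulmx_free_eq0 _ rfA).
  by rewrite -[r *m A]trmxK trmx_mul -/d d0 trmx0.
have Hf : forall t, ED_fiber X u (x - t *: d).
  move=> t; apply/EDcorrE; split.
    by rewrite /X mulmxBr Xx -scalemxAr AAr scaler0 subr0.
  exists (z + t *: r^T).
  by rewrite opprB addrCA addrC Hz mulmxDr scalemxAr.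
have finj : forall t t', x - t *: d = x - t' *: d -> t = t'.
  move=> t t' /addrI /oppr_inj E.
  have : (t - t') *: d == 0 by rewrite scalerBl E subrr.
  by rewrite scaler_eq0 (negbTE dn) orbF subr_eq0 => /eqP.
move=> s.
set ts := [seq k%:R : CC | k <- iota 0 (size s).+1].
have : ~~ all (fun t => (x - t *: d) \in s) ts.
  apply/negP => /allP Hall.
  suff : ((size s).+1 <= size s)%N by rewrite ltnn.
  have {1}-> : (size s).+1 = size [seq x - t *: d | t <- ts] by rewrite !size_map size_iota.
  apply: uniq_leq_size.
    rewrite map_inj_uniq; last by move=> t t'; apply: finj.
    by rewrite map_inj_uniq ?iota_uniq // => a c /eqP; rewrite eqr_nat => /eqP.
  by move=> y /mapP [t tin ->]; apply: Hall.
by case/allPn => t _ tn; exists (x - t *: d); split.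
Qed.

Lemma fiber_uniq x1 x2 u : \det (A *m A^T) != 0 ->
  ED_corr X x1 u -> ED_corr X x2 u -> x1 = x2.
Proof.
move=> dn /EDcorrE [X1 [z1 H1]] /EDcorrE [X2 [z2 H2]].
have U : A *m A^T \in unitmx by rewrite unitmxE unitfE.
have E : forall x z, A *m x = b -> u - x = A^T *m z -> A *m A^T *m z = A *m u - b.
  by move=> x z Ax H; rewrite -mulmxA -H mulmxBr Ax.
have z12 : z1 = z2.
  by rewrite -(mulKmx U z1) -(mulKmx U z2) (E _ _ X1 H1) (E _ _ X2 H2).
have -> : x1 = u - (u - x1) by rewrite opprB addrC subrK.
have -> : x2 = u - (u - x2) by rewrite opprB addrC subrK.
by rewrite H1 H2 z12.
Qed.

Lemma not_mult x u : \det (A *m A^T) != 0 -> ~ mult_ge2 X u x.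
Proof.
move=> dn [v [vn H]].
have Av : A *m v = 0.
  apply/matrixP => i j; rewrite ord1; have := H _ (ideal_row i).
  rewrite (eq_bigr (fun l => (row i A)^T l 0 * v l 0)) => [|l _]; last by rewrite pderiv_lpair.
  by move=> E; rewrite -dot_row [RHS]mxE; exact: E.
have [z vz] : exists z, v = A^T *m z.
  apply/imT => k Ak; have := H _ (ideal_ker _ Ak).
  rewrite (eq_bigr (fun l => (-k) l 0 * v l 0)) => [|l _]; last by rewrite pderiv_lpair.
  by move=> E; apply/eqP; rewrite -oppr_eq0 -dotN; apply/eqP; exact: E.
have U : A *m A^T \in unitmx by rewrite unitmxE unitfE.
have z0 : z = 0.
  by rewrite -(mulKmx U z) -mulmxA -vz Av mulmx0.
by move: vn; rewrite vz z0 mulmx0 eqxx.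
Qed.

Lemma exists_sol : \rank A = n -> exists x0, A *m x0 = b.
Proof.
move=> rk.
have : (b^T <= A^T)%MS by apply: submx_full; rewrite /row_full mxrank_tr rk.
case/submxP => D HD; exists D^T.
by rewrite -[b]trmxK HD trmx_mul trmxK.
Qed.

End ED.

Section Rank.
Variables (n m : nat) (A : 'M[CC]_(n, m)) (b : 'cV[CC]_n).

Lemma rank_cap : row_free A -> \rank (kermx A^T :&: A)%MS = (n - \rank (A *m A^T))%N.
Proof.
move=> rfA.
rewrite -mxrank_ker -(mxrankMfree _ rfA); apply: eqmx_rank.
apply/andP; split.
- have /submxP [D HD] := capmxSr (kermx A^T) A.
  have /sub_kermxP H := capmxSl (kermx A^T) A.
  rewrite HD; apply: submxMr; apply/sub_kermxP.
  by rewrite mulmxA -HD.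
- rewrite sub_capmx submxMl andbT; apply/sub_kermxP.
  by rewrite -mulmxA mulmx_ker.
Qed.

Lemma rankR : (n <= m)%N -> \rank A = n ->
  \rank (kermx A^T + A)%MS = (m - n + \rank (A *m A^T))%N.
Proof.
move=> nm rk.
have rfA : row_free A by rewrite /row_free rk.
have := mxrank_sum_cap (kermx A^T) A.
rewrite rank_cap // mxrank_ker mxrank_tr rk.
have : (\rank (A *m A^T) <= n)%N.
  by apply: leq_trans (mxrankM_maxl _ _) _; rewrite rk.
lia.
Qed.

Lemma charR x0 u : A *m x0 = b ->
  (exists w, A *m u - b = (A *m A^T) *m w) <->
  exists y, u = x0 + (kermx A^T + A)%MS^T *m y.
Proof.
move=> Ax0; split.
- case=> w Hw.
  have Hv : A *m (u - x0) = A *m A^T *m w by rewrite mulmxBr Ax0.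
  have : ((u - x0)^T <= kermx A^T + A)%MS.
    have -> : (u - x0)^T = ((u - x0)^T - w^T *m A) + w^T *m A by rewrite subrK.
    apply: addmx_sub_adds; last exact: submxMl.
    apply/sub_kermxP; rewrite mulmxBl -mulmxA.
    have := congr1 trmx Hv; rewrite !trmx_mul trmxK => ->.
    by rewrite mulmxA subrr.
  case/submxP => D HD; exists D^T.
  by rewrite -trmx_mul -HD trmxK addrC subrK.
- case=> y ->.
  have : (y^T *m (kermx A^T + A)%MS <= kermx A^T + A)%MS by apply: submxMl.
  case/sub_addsmxP => [[D1 D2]] /= HD.
  exists D2^T.
  rewrite mulmxDr Ax0 addrC addKr.
  rewrite -[(kermx A^T + A)%MS^T *m y]trmxK trmx_mul trmxK HD.
  apply: trmx_inj; rewrite !trmx_mul !trmxK mulmxDl -mulmxA mulmx_ker mulmx0 add0r.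
  by rewrite mulmxA.
Qed.
End Rank.

Theorem mainTheorem6 (n m : nat) (A : 'M[CC]_(n, m)) (b : 'cV[CC]_n) :
  (n <= m)%N -> \rank A = n ->
  let X := fun x : 'cV[CC]_m => A *m x = b in
  (forall u, ED_disc X u <-> ED_disc_inf X u) /\
  ((exists u, ED_disc X u) <-> \det (A *m A^T) = 0) /\
  (\det (A *m A^T) = 0 ->
     (forall u, ED_disc X u <->
                exists w : 'cV[CC]_n, A *m u - b = (A *m A^T) *m w) /\
     (exists (u0 : 'cV[CC]_m) (B : 'M[CC]_m),
        \rank B = (m - n + \rank (A *m A^T))%N /\
        forall u, (exists w : 'cV[CC]_n, A *m u - b = (A *m A^T) *m w) <->
                  exists y : 'cV[CC]_m, u = u0 + B *m y)).
Proof.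
move=> nm rk X.
have rfA : row_free A by rewrite /row_free rk.
have [x0 Ax0] := @exists_sol n m A b rk.
have key1 : forall u, ED_disc X u <-> ED_disc_inf X u.
  move=> u; split; last by right.
  case=> [[x [[Fx _] Hm]] | //].
  have [d0|dn] := eqVneq (\det (A *m A^T)) 0.
  - exact: (@fiber_inf n m A b x u rfA d0 Fx).
  - by case: (@not_mult n m A b x u dn Hm).
have inf_det : forall u, ED_disc_inf X u -> \det (A *m A^T) = 0.
  move=> u Hi; apply/eqP; apply: contraT => dn.
  have [x1 [F1 _]] := Hi [::].
  have [x2 [F2 n2]] := Hi [:: x1].
  by move: n2; rewrite (@fiber_uniq n m A b x1 x2 u dn F1 F2) inE eqxx.
have disc_of : forall u x, \det (A *m A^T) = 0 -> ED_corr X x u -> ED_disc X u.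
  by move=> u x d0 Fx; right; exact: (@fiber_inf n m A b x u rfA d0 Fx).
split; first exact: key1.
split.
  split; first by case=> u /key1 /inf_det.
  move=> d0; exists x0; apply: (disc_of _ x0 d0); apply/EDcorrE; split => //.
  by exists 0; rewrite subrr mulmx0.
move=> d0; split.
  move=> u; split.
    move/key1 => Hi; have [x [Fx _]] := Hi [::].
    case/EDcorrE: Fx => Xx [z Hz]; exists z.
    by rewrite -Xx -mulmxBr Hz mulmxA.
  case=> w Hw; apply: (disc_of _ (u - A^T *m w) d0); apply/EDcorrE; split.
    by rewrite /X mulmxBr mulmxA -Hw opprB addrC subrK.
  by exists w; rewrite opprB addrC subrK.
exists x0, (kermx A^T + A)%MS^T; split.
  by rewrite mxrank_tr rankR.
by move=> u; exact: charR Ax0.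
Qed.
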